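(* For every real number $\theta\in(0,1/4]\cup(3/11,2/7]$ there exists a finite simple graph $G$ such that $P^{J(\theta)}(G)\neq G$ and $P^{J(\theta)}\big(P^{J(\theta)}(G)\big)=G$.
   Context: All graphs are finite and simple. For a vertex $v$ of a graph $G$, $N[v]$ denotes its closed neighbourhood in $G$ (the set of neighbours of $v$ together with $v$). The Jaccard similarity of vertices $u,v$ in $G$ is $J_G(u,v)=|N[u]\cap N[v]|/|N[u]\cup N[v]|$. For a real threshold $\theta$, $P^{J(\theta)}(G)$ (the $\theta$-Jaccard polishing of $G$) is the graph on the same vertex set as $G$ in which two distinct vertices $u,v$ are adjacent if and only if $J_G(u,v)\ge\theta$. Equality of graphs means equality of edge sets on the same vertex set. *)

(* Defs.v *)
From mathcomp Require Import all_boot.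
From Stdlib Require Import Reals.

Set Implicit Arguments.
Unset Strict Implicit.
Unset Printing Implicit Defensive.

Definition simple_graph (T : finType) (e : rel T) : Prop :=
  symmetric e /\ irreflexive e.

Definition closed_nbhd (T : finType) (e : rel T) (v : T) : {set T} :=
  [set w | (w == v) || e v w].

Definition jaccard (T : finType) (e : rel T) (u v : T) : R :=
  (INR #|closed_nbhd e u :&: closed_nbhd e v| /
   INR #|closed_nbhd e u :|: closed_nbhd e v|)%R.

Definition jpolish (theta : R) (T : finType) (e : rel T) : rel T :=
  fun u v => (u != v) && (if Rle_dec theta (jaccard e u v) then true else false).

(* Main.v *)
Require Import Defs.
From mathcomp Require Import all_boot zify.
From Stdlib Require Import Reals Lra Lia.

Lemma sum_lt M k : \sum_(j < M) (j < k) = minn M k.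
Proof.
elim: M => [|M IH]; first by rewrite big_ord0 min0n.
rewrite big_ord_recr /= IH. case: (ltnP M k) => /= H; lia.
Qed.

Definition wl (s p w q k : nat) : nat :=
  if k == 0 then s else if k == 1 then p else if k <= 7 then w else q.
Notation wtf p w q := (wl 1 p w q).
Definition Mb p w q := (1 + p + w + q)%N.
Notation VT p w q := ('I_14 * 'I_(Mb p w q))%type.
Definition act p w q (v : VT p w q) : bool := (v.2 < wtf p w q v.1)%N.
Arguments act {p w q} v.

Lemma wt_le p w q k : wtf p w q k <= Mb p w q.
Proof. rewrite /wl /Mb; case: (k == 0); case: (k == 1); case: (k <= 7); lia. Qed.

Lemma count_act p w q (P : nat -> bool) :
  #|[set v : VT p w q | act v && P v.1]| = \sum_(i < 14) P i * wtf p w q i.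
Proof.
rewrite -sum1_card big_mkcond /=.
transitivity (\sum_(i < 14) \sum_(j < Mb p w q) (if (i, j) \in [set v : VT p w q | act v && P v.1] then 1 else 0)).
  by rewrite pair_bigA; apply: eq_bigr => -[i j] _.
apply: eq_bigr => i _.
transitivity (\sum_(j < Mb p w q) (P i * (j < wtf p w q i))).
  by apply: eq_bigr => j _; rewrite inE /act /=; case: (P i); case: (j < _)%N; rewrite ?andbF ?andbT.
rewrite -big_distrr /= sum_lt. have := wt_le p w q i. lia.
Qed.


Definition base (c d : nat) : bool :=
  [|| (c == 0) && (d == 1),
      [&& 2 <= c, c <= 7, 2 <= d, d <= 7 & (d == c.+1) || (c == 2) && (d == 7)]
    | [&& 2 <= c, c <= 7 & d == c + 6]].
Definition xadj (h : bool) (d : nat) : bool :=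
  if h then [|| d == 2, d == 4 | d == 6] else [|| d == 3, d == 5 | d == 7].
Definition Q (h : bool) (c d : nat) : bool :=
  [|| c == d, base c d, base d c, (c == 0) && xadj h d | (d == 0) && xadj h c].

Lemma QC h c d : Q h c d = Q h d c.
Proof. rewrite /Q [d == c]eqtype.eq_sym. by case: (c == d); case: (base c d); case: (base d c); case: ((c == 0) && _); case: ((d == 0) && _). Qed.
Lemma Qrefl h c : Q h c c.
Proof. by rewrite /Q eqxx. Qed.

Definition E p w q (h : bool) : rel (VT p w q) :=
  fun u v => [&& u != v, act u, act v & Q h u.1 v.1].

Definition sum14 (F : nat -> nat) : nat :=
  F 0 + F 1 + F 2 + F 3 + F 4 + F 5 + F 6 + F 7 + F 8 + F 9 + F 10 + F 11 + F 12 + F 13.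
Lemma s14 (F : nat -> nat) : \sum_(i < 14) F i = sum14 F.
Proof. by rewrite !big_ord_recr big_ord0 /=. Qed.
Definition Icg s p w q h (c d : nat) := sum14 (fun i => (Q h c i && Q h d i) * wl s p w q i).
Definition Ucg s p w q h (c d : nat) := sum14 (fun i => (Q h c i || Q h d i) * wl s p w q i).
Arguments Icg : simpl never.
Arguments Ucg : simpl never.
Notation Ic p w q := (Icg 1 p w q).
Notation Uc p w q := (Ucg 1 p w q).

Lemma nbhd_act p w q h (u : VT p w q) : act u ->
  closed_nbhd (E p w q h) u = [set v : VT p w q | act v && Q h u.1 v.1].
Proof.
move=> au; apply/setP => v; rewrite !inE /E.
case: (eqVneq v u) => [->|neq] /=; first by rewrite au Qrefl.
by rewrite au.
Qed.

Lemma nbhd_inact p w q h (u : VT p w q) : ~~ act u ->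
  closed_nbhd (E p w q h) u = [set u].
Proof.
move=> au; apply/setP => v; rewrite !inE /E.
case: (eqVneq v u) => [->|neq] //=. by rewrite (negbTE au) ?andbF.
Qed.

Lemma count_and p w q h (c d : nat) :
  #|[set v : VT p w q | act v && (Q h c v.1 && Q h d v.1)]| = Ic p w q h c d.
Proof.
exact: (etrans (count_act p w q (fun x => Q h c x && Q h d x))
                (s14 (fun i => (Q h c i && Q h d i) * wtf p w q i))).
Qed.
Lemma count_or p w q h (c d : nat) :
  #|[set v : VT p w q | act v && (Q h c v.1 || Q h d v.1)]| = Uc p w q h c d.
Proof.
exact: (etrans (count_act p w q (fun x => Q h c x || Q h d x))
                (s14 (fun i => (Q h c i || Q h d i) * wtf p w q i))).
Qed.

Lemma jac_act p w q h (u v : VT p w q) : act u -> act v ->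
  jaccard (E p w q h) u v = (INR (Ic p w q h u.1 v.1) / INR (Uc p w q h u.1 v.1))%R.
Proof.
move=> au av; rewrite /jaccard !nbhd_act //.
have -> : [set x : VT p w q | act x && Q h u.1 x.1] :&: [set x | act x && Q h v.1 x.1]
   = [set x | act x && (Q h u.1 x.1 && Q h v.1 x.1)].
  by apply/setP => x; rewrite !inE; case: (act x).
have -> : [set x : VT p w q | act x && Q h u.1 x.1] :|: [set x | act x && Q h v.1 x.1]
   = [set x | act x && (Q h u.1 x.1 || Q h v.1 x.1)].
  by apply/setP => x; rewrite !inE; case: (act x).
by rewrite count_and count_or.
Qed.

Lemma jac_inact p w q h (u v : VT p w q) : u != v -> ~~ act u || ~~ act v ->
  jaccard (E p w q h) u v = 0%R.
Proof.
move=> neq H; rewrite /jaccard.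
have -> : closed_nbhd (E p w q h) u :&: closed_nbhd (E p w q h) v = set0.
  apply/setP => x; rewrite !inE /E.
  case: (eqVneq x u) => [xu|nu]; case: (eqVneq x v) => [xv|nv] //=.
  - by move: neq; rewrite -xu -xv eqxx.
  - rewrite xu; by case/orP: H => /negbTE ->; rewrite /= ?andbF.
  - rewrite xv; by case/orP: H => /negbTE ->; rewrite /= ?andbF.
  - by case/orP: H => /negbTE ->; rewrite /= ?andbF.
by rewrite cards0 /= Rdiv_0_l.
Qed.

Lemma ge_frac (th : R) a b h1 h2 : (0 < b)%N -> (0 < h2)%N ->
  (th <= INR h1 / INR h2)%R -> (b * h1 <= a * h2)%N -> (th <= INR a / INR b)%R.
Proof.
move=> /ltP hb /ltP hh H1 /leP H2.
apply: (Rle_trans _ _ _ H1).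
have Hb := lt_0_INR _ hb; have Hh := lt_0_INR _ hh.
have H3 := le_INR _ _ H2; rewrite !mult_INR in H3.
apply Rmult_le_reg_r with (INR b * INR h2)%R; first nra.
replace (INR h1 / INR h2 * (INR b * INR h2))%R with (INR b * INR h1)%R by (field; lra).
replace (INR a / INR b * (INR b * INR h2))%R with (INR a * INR h2)%R by (field; lra).
lra.
Qed.

Lemma lt_frac {th : R} {a b l1 l2 : nat} : (0 < b)%N -> (0 < l2)%N ->
  (INR l1 / INR l2 < th)%R -> (a * l2 <= b * l1)%N -> ~ (th <= INR a / INR b)%R.
Proof.
move=> /ltP hb /ltP hh H1 /leP H2 H4.
have Hb := lt_0_INR _ hb; have Hh := lt_0_INR _ hh.
have H3 := le_INR _ _ H2; rewrite !mult_INR in H3.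
have : (INR a / INR b <= INR l1 / INR l2)%R.
  apply Rmult_le_reg_r with (INR b * INR l2)%R; first nra.
  replace (INR l1 / INR l2 * (INR b * INR l2))%R with (INR b * INR l1)%R by (field; lra).
  replace (INR a / INR b * (INR b * INR l2))%R with (INR a * INR l2)%R by (field; lra).
  lra.
lra.
Qed.

Lemma E_act p w q h (u v : VT p w q) : u != v -> act u -> act v -> E p w q h u v = Q h u.1 v.1.
Proof. by move=> n a b; rewrite /E n a b. Qed.
Lemma E_inactl p w q h (u v : VT p w q) : act u = false -> E p w q h u v = false.
Proof. by move=> a; rewrite /E a andbF. Qed.
Lemma E_inactr p w q h (u v : VT p w q) : act v = false -> E p w q h u v = false.
Proof. by move=> a; rewrite /E a !andbF. Qed.

Lemma polish_ok p w q h (th : R) h1 h2 l1 l2 : (0 < th)%R -> (0 < h2)%N -> (0 < l2)%N ->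
  (th <= INR h1 / INR h2)%R -> (INR l1 / INR l2 < th)%R ->
  (forall c d : 'I_14, (0 < Uc p w q h c d)%N /\
     (if Q (~~ h) c d then (Uc p w q h c d * h1 <= Ic p w q h c d * h2)%N
      else (Ic p w q h c d * l2 <= Uc p w q h c d * l1)%N)) ->
  jpolish th (E p w q h) =2 E p w q (~~ h).
Proof.
move=> th0 h20 l20 Hh Hl Hc u v; rewrite /jpolish.
case: (eqVneq u v) => [->|neq]; first by rewrite /E eqxx.
rewrite /=.
case au: (act u); case av: (act v).
- rewrite (jac_act p w q h u v au av) (E_act _ _ _ _ _ _ neq au av). have [Hu Hcc] := Hc u.1 v.1.
  case: (Q (~~ h) _ _) Hcc => Hcc; case: Rle_dec => Hn.
  + by [].
  + by exfalso; apply: Hn; apply: ge_frac Hh Hcc.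
  + by exfalso; exact: (lt_frac Hu l20 Hl Hcc Hn).
  + by [].
- rewrite (jac_inact p w q h u v neq) ?av ?orbT // (E_inactr _ _ _ _ _ _ av); case: Rle_dec => H //; lra.
- rewrite (jac_inact p w q h u v neq) ?au ?orbT // (E_inactl _ _ _ _ _ _ au); case: Rle_dec => H //; lra.
- rewrite (jac_inact p w q h u v neq) ?au ?orbT // (E_inactl _ _ _ _ _ _ au); case: Rle_dec => H //; lra.
Qed.

Lemma wl_lin s0 s1 p0 p1 w0 w1 q0 q1 m k :
  wl (s0 + m * s1) (p0 + m * p1) (w0 + m * w1) (q0 + m * q1) k = wl s0 p0 w0 q0 k + m * wl s1 p1 w1 q1 k.
Proof. rewrite /wl. by case: (k == 0); case: (k == 1); case: (k <= 7). Qed.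

Lemma sum14_ext (F G : nat -> nat) : (forall i, F i = G i) -> sum14 F = sum14 G.
Proof. move=> H; by rewrite /sum14 !H. Qed.

Lemma sum14_lin (f x y : nat -> nat) m :
  sum14 (fun i => f i * (x i + m * y i)) = sum14 (fun i => f i * x i) + m * sum14 (fun i => f i * y i).
Proof. rewrite /sum14 -!plusE -!multE. ring. Qed.

Lemma Icg_lin s0 s1 p0 p1 w0 w1 q0 q1 m h c d :
  Icg (s0 + m * s1) (p0 + m * p1) (w0 + m * w1) (q0 + m * q1) h c d
  = Icg s0 p0 w0 q0 h c d + m * Icg s1 p1 w1 q1 h c d.
Proof.
rewrite /Icg -sum14_lin; apply: sum14_ext => i; by rewrite wl_lin.
Qed.
Lemma Ucg_lin s0 s1 p0 p1 w0 w1 q0 q1 m h c d :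
  Ucg (s0 + m * s1) (p0 + m * p1) (w0 + m * w1) (q0 + m * q1) h c d
  = Ucg s0 p0 w0 q0 h c d + m * Ucg s1 p1 w1 q1 h c d.
Proof.
rewrite /Ucg -sum14_lin; apply: sum14_ext => i; by rewrite wl_lin.
Qed.

Definition chk1 (h : bool) (c d : nat) : bool :=
  let I0 := Icg 1 7 4 7 h c d in let I1 := Icg 0 3 0 3 h c d in
  let U0 := Ucg 1 7 4 7 h c d in let U1 := Ucg 0 3 0 3 h c d in
  (0 < U0) && (if Q (~~ h) c d then (U0 <= 4 * I0) && (U1 <= I0 + 4 * I1)
               else [&& I1 == 0, 5 * I0 <= U0 & I0 <= U1]).

Lemma chk1_all : all (fun c => all (fun d => chk1 true c d && chk1 false c d) (iota 0 14)) (iota 0 14).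
Proof. vm_compute. reflexivity. Qed.

Definition chk2 (h : bool) (c d : nat) : bool :=
  let I := Icg 1 1 1 1 h c d in let U := Ucg 1 1 1 1 h c d in
  (0 < U) && (if Q (~~ h) c d then U * 2 <= I * 7 else I * 11 <= U * 3).

Lemma chk2_all : all (fun c => all (fun d => chk2 true c d && chk2 false c d) (iota 0 14)) (iota 0 14).
Proof. vm_compute. reflexivity. Qed.

Lemma get_chk (f : nat -> nat -> bool) (c d : 'I_14) :
  all (fun c => all (fun d => f c d) (iota 0 14)) (iota 0 14) -> f c d.
Proof.
move/allP => /(_ c); rewrite mem_iota ltn_ord => /(_ isT) /allP /(_ d).
by rewrite mem_iota ltn_ord => /(_ isT).
Qed.

Lemma r2 h (c d : 'I_14) : (0 < Uc 1 1 1 h c d)%N /\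
     (if Q (~~ h) c d then (Uc 1 1 1 h c d * 2 <= Ic 1 1 1 h c d * 7)%N
      else (Ic 1 1 1 h c d * 11 <= Uc 1 1 1 h c d * 3)%N).
Proof.
have H : chk2 h c d.
  have := get_chk (fun c d => chk2 true c d && chk2 false c d) c d chk2_all.
  by case/andP; case: h.
rewrite /chk2 in H. by case/andP: H.
Qed.

Lemma r1 h m (c d : 'I_14) : (0 < Uc (3*m+7) 4 (3*m+7) h c d)%N /\
     (if Q (~~ h) c d then (Uc (3*m+7) 4 (3*m+7) h c d * 1 <= Ic (3*m+7) 4 (3*m+7) h c d * (m+4))%N
      else (Ic (3*m+7) 4 (3*m+7) h c d * (m+5) <= Uc (3*m+7) 4 (3*m+7) h c d * 1)%N).
Proof.
have H : chk1 h c d.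
  have := get_chk (fun c d => chk1 true c d && chk1 false c d) c d chk1_all.
  by case/andP; case: h.
have eI := Icg_lin 1 0 7 3 4 0 7 3 m h c d.
have eU := Ucg_lin 1 0 7 3 4 0 7 3 m h c d.
rewrite !muln0 !addn0 in eI eU.
have -> : 3 * m + 7 = 7 + m * 3 by lia.
rewrite eI eU.
move: H; rewrite /chk1.
move: (Icg 1 7 4 7 h c d) (Icg 0 3 0 3 h c d) (Ucg 1 7 4 7 h c d) (Ucg 0 3 0 3 h c d) => I0 I1 U0 U1.
case: (Q (~~ h) c d) => /=.
- case/and3P => H0 H1 H2; split; nia.
- case/andP => H0 /and3P [/eqP H1 H2 H3]; subst I1; split; nia.
Qed.

Lemma jpolish_ext (th : R) (T : finType) (e1 e2 : rel T) :
  e1 =2 e2 -> jpolish th e1 =2 jpolish th e2.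
Proof.
move=> H u v; rewrite /jpolish /jaccard.
have N : forall x, closed_nbhd e1 x = closed_nbhd e2 x.
  by move=> x; apply/setP => y; rewrite !inE H.
by rewrite !N.
Qed.

Lemma E_sym p w q h : symmetric (E p w q h).
Proof.
move=> u v; rewrite /E QC [v == u]eqtype.eq_sym.
by case: (u == v); case: (act u); case: (act v).
Qed.

Lemma E_irr p w q h : irreflexive (E p w q h).
Proof. by move=> u; rewrite /E eqxx. Qed.

Lemma cycle_from p w q (th : R) h1 h2 l1 l2 : (0 < th)%R -> (0 < h2)%N -> (0 < l2)%N ->
  (th <= INR h1 / INR h2)%R -> (INR l1 / INR l2 < th)%R -> (0 < w)%N ->
  (forall h (c d : 'I_14), (0 < Uc p w q h c d)%N /\
     (if Q (~~ h) c d then (Uc p w q h c d * h1 <= Ic p w q h c d * h2)%N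
      else (Ic p w q h c d * l2 <= Uc p w q h c d * l1)%N)) ->
  exists (T : finType) (e : rel T),
    simple_graph e /\ ~ (jpolish th e =2 e) /\ jpolish th (jpolish th e) =2 e.
Proof.
move=> th0 h20 l20 Hh Hl w0 Hc.
have P1 := polish_ok p w q true th h1 h2 l1 l2 th0 h20 l20 Hh Hl (Hc true).
have P2 := polish_ok p w q false th h1 h2 l1 l2 th0 h20 l20 Hh Hl (Hc false).
exists (VT p w q), (E p w q true); split; first by split; [apply: E_sym | apply: E_irr].
split.
- move=> H.
  have hM : (0 < Mb p w q)%N by rewrite /Mb; lia.
  pose u : VT p w q := (@Ordinal 14 0 isT, Ordinal hM).
  pose v : VT p w q := (@Ordinal 14 2 isT, Ordinal hM).
  have := H u v; rewrite P1.
  have neq : u != v by [].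
  have au : act u by rewrite /act /=.
  have av : act v by rewrite /act /wl /=.
  by rewrite !(E_act _ _ _ _ _ _ neq au av).
- move=> u v. rewrite (@jpolish_ext th _ _ _ P1 u v). exact: P2.
Qed.

Lemma inv_le (th x : R) : (0 < th)%R -> (0 < x)%R -> (x <= / th)%R -> (th <= 1 / x)%R.
Proof.
move=> h0 x0 H. have := Rinv_le_contravar _ _ x0 H. rewrite Rinv_inv. lra.
Qed.
Lemma inv_lt (th x : R) : (0 < th)%R -> (0 < x)%R -> (/ th < x)%R -> (1 / x < th)%R.
Proof.
move=> h0 x0 H. have := Rinv_lt_contravar _ _ (Rmult_lt_0_compat _ _ (Rinv_0_lt_compat _ h0) x0) H.
rewrite Rinv_inv. lra.
Qed.

Theorem theorem5 (theta : R) :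
  ((0 < theta /\ theta <= 1/4) \/ (3/11 < theta /\ theta <= 2/7))%R ->
  exists (T : finType) (e : rel T),
    simple_graph e /\
    ~ (jpolish theta e =2 e) /\
    jpolish theta (jpolish theta e) =2 e.
Proof.
case=> [[t0 t1]|[t0 t1]].
- set r := (/ theta)%R.
  have r4 : (4 <= r)%R.
    have := Rinv_le_contravar _ _ t0 t1. rewrite /r. 
    have -> : (/ (1/4) = 4)%R by field. lra.
  have [A1 A2] := archimed r.
  set z := up r in A1 A2.
  have z5 : (5 <= z)%Z.
    have : (4 < z)%Z by apply: lt_IZR; lra.
    lia.
  set n := Z.to_nat (z - 1).
  have En : INR n = IZR (z - 1).
    by rewrite INR_IZR_INZ /n Znat.Z2Nat.id //; lia.
  have n4 : (4 <= n)%N by apply/leP; rewrite /n; lia.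
  set m := (n - 4)%N.
  have Em : INR (m + 4) = INR n by congr INR; rewrite /m; lia.
  have Em5 : INR (m + 5) = (INR n + 1)%R.
    have -> : (m + 5 = n.+1)%N by rewrite /m; lia.
    by rewrite S_INR.
  have n0 : (0 < INR n)%R by rewrite En; apply: IZR_lt; lia.
  rewrite minus_IZR /= in En.
  apply: (@cycle_from (3*m+7) 4 (3*m+7) theta 1 (m+4) 1 (m+5)) => //.
  + lia.
  + lia.
  + change (INR 1) with 1%R. rewrite Em. apply: inv_le => //. rewrite -/r. lra.
  + change (INR 1) with 1%R. rewrite Em5. apply: inv_lt => //; first lra. rewrite -/r. lra.
  + move=> h c d. exact: r1.
- apply: (@cycle_from 1 1 1 theta 2 7 3 11) => //.
  + lra.
  + rewrite (INR_IZR_INZ 2) (INR_IZR_INZ 7) /=. lra.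
  + rewrite (INR_IZR_INZ 3) (INR_IZR_INZ 11) /=. lra.
  + move=> h c d. exact: r2.
Qed.
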